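(* Let $\lambda_1\ge\lambda_2\ge\cdots\ge\lambda_p>0$ and define the norm $\Omega(\beta):=\sum_{i=1}^p\lambda_i|\beta|_{(i)}$ on $\mathbb{R}^p$, where $|\beta|_{(1)}\ge\cdots\ge|\beta|_{(p)}$ are the absolute values of the entries of $\beta$ in decreasing order. Let $S\subseteq\{1,\dots,p\}$, $s=|S|$, $r=p-s$, and define on $\mathbb{R}^{r}$ (indexed by $S^c$) $$\Omega^{S^c}(\beta_{S^c}):=\sum_{l=1}^r\lambda_{p-r+l}|\beta|_{(l,S^c)},$$ where $|\beta|_{(1,S^c)}\ge\cdots\ge|\beta|_{(r,S^c)}$ are the absolute values of the entries of $\beta_{S^c}$ in decreasing order. Then $\Omega(\beta)\ge\Omega(\beta_S)+\Omega^{S^c}(\beta_{S^c})$ for all $\beta\in\mathbb{R}^p$. Moreover, $\Omega^{S^c}$ is the strongest such norm: for every norm $\underline\Omega^{S^c}$ on $\mathbb{R}^{r}$ satisfying $\Omega(\beta)\ge\Omega(\beta_S)+\underline\Omega^{S^c}(\beta_{S^c})$ for all $\beta\in\mathbb{R}^p$, one has $\underline\Omega^{S^c}(v)\le\Omega^{S^c}(v)$ for all $v\in\mathbb{R}^r$.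
   Context: $\beta_S$ denotes the vector in $\mathbb{R}^p$ agreeing with $\beta$ on $S$ and equal to $0$ off $S$ (when $\Omega$ is applied), and $\beta_{S^c}=(\beta_j)_{j\in S^c}\in\mathbb{R}^{r}$. *)

(* Defs.v *)
From mathcomp Require Import all_boot all_order all_algebra.
Set Implicit Arguments. Unset Strict Implicit. Unset Printing Implicit Defensive.
Import Order.TTheory GRing.Theory Num.Theory.
Local Open Scope ring_scope.

(* absolute values of the entries of v, sorted in nonincreasing order:
   nth 0 (abs_sorted v) i = |v|_(i+1) *)
Definition abs_sorted (R : realFieldType) (n : nat) (v : 'rV[R]_n) : seq R :=
  sort (fun x y : R => y <= x) [seq `|v ord0 i| | i <- enum 'I_n].

Definition sl1 (R : realFieldType) (w : nat -> R) (n : nat) (v : 'rV[R]_n) : R :=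
  \sum_(i < n) w i * (abs_sorted v)`_i.

(* Omega(beta), with lam i the paper's lambda_{i+1} *)
Definition Omega (R : realFieldType) (lam : nat -> R) (p : nat) (b : 'rV[R]_p) : R :=
  sl1 lam b.

Definition restr (R : realFieldType) (p : nat) (S : {set 'I_p}) (b : 'rV[R]_p) : 'rV[R]_p :=
  \row_i (if i \in S then b ord0 i else 0).

(* beta_{S^c} in R^r, r = #|S^c|, entries of S^c listed in increasing order *)
Definition restrC (R : realFieldType) (p : nat) (S : {set 'I_p}) (b : 'rV[R]_p)
  : 'rV[R]_#|~: S| :=
  \row_k b ord0 (enum_val k).

Definition OmegaSc (R : realFieldType) (lam : nat -> R) (p : nat) (S : {set 'I_p})
  (v : 'rV[R]_#|~: S|) : R :=
  sl1 (fun l => lam (p - #|~: S| + l)%N) v.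

Definition is_norm (R : realFieldType) (n : nat) (N : 'rV[R]_n -> R) : Prop :=
  [/\ forall v, 0 <= N v,
      forall v, N v = 0 -> v = 0,
      forall (a : R) v, N (a *: v) = `|a| * N v
    & forall u v, N (u + v) <= N u + N v].

(* Main.v *)
Require Import Defs.
From mathcomp Require Import all_boot all_order all_algebra.
From mathcomp Require Import ring lra.
Set Implicit Arguments. Unset Strict Implicit. Unset Printing Implicit Defensive.
Import Order.TTheory GRing.Theory Num.Theory.
Local Open Scope ring_scope.

Section Gen.
Variable R : realFieldType.

Fixpoint fsum (w : nat -> R) (X : seq R) : R :=
  if X is x :: X' then w 0%N * x + fsum (fun i => w i.+1) X' else 0.

Fixpoint ins (x : R) (Y : seq R) : seq R :=
  if Y is y :: Y' then (if y <= x then x :: Y else y :: ins x Y') else [:: x].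

Definition isort (X : seq R) := foldr ins [::] X.

Definition noninc (n : nat) (w : nat -> R) := forall i, (i.+1 < n)%N -> w i.+1 <= w i.

Lemma fsum_ext w w' X : (forall i, w i = w' i) -> fsum w X = fsum w' X.
Proof. elim: X w w' => //= x X IH w w' H; rewrite H (IH _ (fun i => w' i.+1)) //. Qed.

Lemma fsum_cat w X Y : fsum w (X ++ Y) = fsum w X + fsum (fun i => w (size X + i)%N) Y.
Proof.
elim: X w => /= [|x X IH] w; first by rewrite add0r; apply: fsum_ext.
by rewrite IH addrA.
Qed.

Lemma fsum_nseq0 w n : fsum w (nseq n 0) = 0.
Proof. elim: n w => //= n IH w; by rewrite IH mulr0 addr0. Qed.

Lemma fsum_big (w : nat -> R) n (X : seq R) : size X = n -> \sum_(i < n) w i * X`_i = fsum w X.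
Proof.
elim: X n w => [|x X IH] n w <-; first by rewrite big_ord0.
rewrite big_ord_recl /= -(IH (size X) (fun i => w i.+1)) //.
Qed.

Lemma size_ins x Y : size (ins x Y) = (size Y).+1.
Proof. elim: Y => //= y Y IH; case: ifP => //= _; by rewrite IH. Qed.

Lemma size_isort X : size (isort X) = size X.
Proof. elim: X => //= x X IH; by rewrite size_ins IH. Qed.

Lemma insA x Y w : noninc (size Y).+1 w ->
  w 0%N * x + fsum (fun i => w i.+1) Y <= fsum w (ins x Y).
Proof.
elim: Y w => [|y Y IH] w Hw /=; first by [].
case: ifP => Hyx /=; first by [].
have H1 := IH (fun i => w i.+1) (fun i Hi => Hw i.+1 Hi).
have Hw0 : w 1%N <= w 0%N by apply: Hw.
have Hxy : x <= y by apply/ltW; rewrite ltNge Hyx.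
have K : 0 <= (w 0%N - w 1%N) * (y - x) by apply: mulr_ge0; rewrite subr_ge0.
move: H1 K; set F := fsum _ Y; set G := fsum _ (ins x Y).
move=> H1 K. nra.
Qed.

Lemma isortB w X : noninc (size X) w -> fsum w X <= fsum w (isort X).
Proof.
elim: X w => [|x X IH] w Hw //=.
have := @insA x (isort X) w; rewrite size_isort => /(_ Hw) h.
apply: le_trans h.
rewrite lerD2l; apply: IH => i Hi; apply: Hw => /=; exact: Hi.
Qed.

Definition geR : rel R := fun x y => y <= x.

Lemma geR_tr : transitive geR.
Proof. move=> y x z; rewrite /geR => h1 h2; exact: le_trans h2 h1. Qed.
Lemma geR_anti : antisymmetric geR.
Proof. move=> x y /andP[h1 h2]; apply/eqP; rewrite eq_le; apply/andP; split; [exact: h2|exact: h1]. Qed.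
Lemma geR_total : total geR.
Proof. move=> x y; rewrite /geR; exact: le_total. Qed.

Lemma path_ins z x Y : x <= z -> path geR z Y -> path geR z (ins x Y).
Proof.
elim: Y z => [|y Y IH] z hxz /=; first by rewrite /geR hxz.
case/andP=> hzy hp; case: ifP => hyx /=.
  by rewrite /geR hxz hyx.
rewrite hzy IH //; apply/ltW; rewrite ltNge hyx //.
Qed.

Lemma sorted_ins x Y : sorted geR Y -> sorted geR (ins x Y).
Proof.
case: Y => [|y Y] //= hp; case: ifP => hyx /=; first by rewrite /geR hyx.
apply: path_ins => //; apply/ltW; rewrite ltNge hyx //.
Qed.

Lemma sorted_isort X : sorted geR (isort X).
Proof. elim: X => //= x X IH; exact: sorted_ins. Qed.

Lemma perm_ins x Y : perm_eq (ins x Y) (x :: Y).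
Proof.
elim: Y => [|y Y IH] //=; case: ifP => _ //.
apply: perm_trans (_ : perm_eq (y :: x :: Y) _).
  by rewrite perm_cons.
by rewrite (perm_catCA [:: y] [:: x] Y).
Qed.

Lemma perm_isort X : perm_eq (isort X) X.
Proof.
elim: X => //= x X IH; apply: perm_trans (perm_ins _ _) _; by rewrite perm_cons.
Qed.

Lemma isort_sort X : isort X = sort geR X.
Proof.
apply: (sorted_eq geR_tr geR_anti); rewrite ?sorted_isort ?sort_sorted //.
  exact: geR_total.
by rewrite perm_sym perm_sort perm_sym perm_isort.
Qed.

Lemma rearr w X : noninc (size X) w -> fsum w X <= fsum w (sort geR X).
Proof. rewrite -isort_sort; exact: isortB. Qed.

Lemma sort_cat_sep A C : (forall a c, a \in A -> c \in C -> c <= a) ->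
  sort geR (A ++ C) = sort geR A ++ sort geR C.
Proof.
move=> H; apply: (sorted_eq geR_tr geR_anti).
- exact: (sort_sorted geR_total).
- rewrite sorted_pairwise; last exact: geR_tr.
  rewrite pairwise_cat; apply/and3P; split.
  + apply/allrelP => a c; rewrite !mem_sort; exact: H.
  + rewrite -sorted_pairwise; [exact: (sort_sorted geR_total)|exact: geR_tr].
  + rewrite -sorted_pairwise; [exact: (sort_sorted geR_total)|exact: geR_tr].
- by rewrite perm_sort perm_sym perm_cat // perm_sort.
Qed.
End Gen.

Section Vec.
Variable R : realFieldType.
Variable p : nat.
Variable S : {set 'I_p}.

Definition Ab (b : 'rV[R]_p) := [seq `|b ord0 i| | i <- enum S].
Definition Cb (b : 'rV[R]_p) := [seq `|b ord0 i| | i <- enum (~: S)].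

Lemma perm_enumSC : perm_eq (enum 'I_p) (enum S ++ enum (~: S)).
Proof.
apply: uniq_perm; first exact: enum_uniq.
  rewrite cat_uniq !enum_uniq /= andbT; apply/hasPn => x.
  by rewrite !mem_enum inE => /negbTE ->.
by move=> x; rewrite mem_cat !mem_enum !inE; case: (x \in S).
Qed.

Lemma sl1_split w (b : 'rV[R]_p) :
  sl1 w b = fsum w (sort (@geR R) (Ab b ++ Cb b)).
Proof.
rewrite /sl1 (fsum_big w); last by rewrite size_sort size_map size_enum_ord.
congr fsum; rewrite /abs_sorted.
apply/(perm_sortP (@geR_total R) (@geR_tr R) (@geR_anti R)).
by rewrite /Ab /Cb -map_cat perm_map // perm_enumSC.
Qed.

Lemma Ab_ge0 b a : a \in Ab b -> 0 <= a.
Proof. by case/mapP => i _ ->. Qed.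

Lemma sort_nseq0 n : sort (@geR R) (nseq n 0) = nseq n 0.
Proof.
apply: sorted_sort; first exact: geR_tr.
case: n => // n /=; elim: n => //= n ->; by rewrite /geR lexx.
Qed.

Lemma Omega_restr w b : sl1 w (restr S b) = fsum w (sort (@geR R) (Ab b)).
Proof.
rewrite sl1_split.
have -> : Ab (restr S b) = Ab b.
  by apply/eq_in_map => i; rewrite mem_enum mxE => ->.
have -> : Cb (restr S b) = nseq (size (enum (~: S))) 0.
  rewrite /Cb (_ : map _ _ = map (fun _ => 0) (enum (~: S))); first by elim: (enum _) => //= x s ->.
  apply/eq_in_map => i; rewrite mem_enum inE mxE => /negbTE ->; rewrite normr0.
  by [].
rewrite sort_cat_sep.
  by rewrite sort_nseq0 fsum_cat fsum_nseq0 addr0.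
move=> a c /Ab_ge0 ha; rewrite mem_nseq => /andP[_ /eqP ->]; exact: ha.
Qed.

Lemma mapEV (T : Type) (g : 'I_p -> T) (A : {set 'I_p}) :
  [seq g (enum_val k) | k <- enum 'I_#|A|] = [seq g i | i <- enum A].
Proof.
have E : size (enum 'I_#|A|) = #|A| := size_enum_ord _.
case Es: (enum A) => [|a0 s].
  rewrite (_ : enum _ = [::]) //; apply/size0nil.
  by apply: (etrans E); rewrite cardE Es.
have HA : #|A| = size (a0 :: s) by rewrite cardE Es.
apply: (@eq_from_nth _ (g a0)).
  rewrite !size_map -HA -enumT; exact: E.
move=> i; rewrite size_map => Hi0.
have Hi : (i < #|A|)%N by move: Hi0; rewrite E.
rewrite (nth_map (Ordinal Hi)) // (nth_map a0) -?HA // (enum_val_nth a0) Es.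
congr (g (nth _ _ _)); exact: nth_enum_ord.
Qed.

Lemma sl1_restrC w (b : 'rV[R]_p) :
  sl1 w (restrC S b) = fsum w (sort (@geR R) (Cb b)).
Proof.
rewrite /sl1 (fsum_big w); last by rewrite size_sort size_map size_enum_ord.
congr fsum; rewrite /abs_sorted /Cb -mapEV; congr sort.
by apply/eq_map => k; rewrite mxE.
Qed.
End Vec.

Lemma split_eq (R : realFieldType) (p : nat) (lam : nat -> R) (S : {set 'I_p}) b :
  fsum lam (sort (@geR R) (Ab S b) ++ sort (@geR R) (Cb S b)) =
  sl1 lam (restr S b) + sl1 (fun l => lam (p - #|~: S| + l)%N) (restrC S b).
Proof.
rewrite Omega_restr sl1_restrC fsum_cat; congr (_ + _); apply: fsum_ext => i.
have Hs : (p - #|~: S|)%N = #|S| by rewrite [RHS]cardsCs card_ord.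
by rewrite size_sort size_map -cardE Hs.
Qed.

Theorem lemma6 (R : realFieldType) (p : nat) (lam : nat -> R)
  (lam_noninc : forall i : nat, (i.+1 < p)%N -> lam i.+1 <= lam i)
  (lam_pos : forall i : nat, (i < p)%N -> 0 < lam i)
  (S : {set 'I_p}) :
  (forall b : 'rV[R]_p,
      Omega lam (restr S b) + OmegaSc lam (restrC S b) <= Omega lam b)
  /\
  (forall N : 'rV[R]_#|~: S| -> R, is_norm N ->
     (forall b : 'rV[R]_p, Omega lam (restr S b) + N (restrC S b) <= Omega lam b) ->
     forall v : 'rV[R]_#|~: S|, N v <= OmegaSc lam v).
Proof.
split.
  move=> b; rewrite /Omega /OmegaSc -split_eq (sl1_split S).
  have -> : sort (@geR R) (Ab S b ++ Cb S b) =
            sort (@geR R) (sort (@geR R) (Ab S b) ++ sort (@geR R) (Cb S b)).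
    apply/(perm_sortP (@geR_total R) (@geR_tr R) (@geR_anti R)).
    by rewrite perm_sym perm_cat ?perm_sort.
  apply: rearr => i; rewrite size_cat !size_sort !size_map -!cardE cardsC card_ord.
  exact: lam_noninc.
move=> N _ H v.
pose M := \sum_k `|v ord0 k|.
have M0 : 0 <= M by apply: sumr_ge0 => k _; exact: normr_ge0.
pose b : 'rV[R]_p := \row_i (if i \in S then M
    else \sum_(k : 'I_#|~: S| | enum_val k == i) v ord0 k).
have Hrc : restrC S b = v.
  apply/rowP => k; rewrite !mxE.
  have : enum_val k \in ~: S := enum_valP k.
  rewrite inE => /negbTE ->.
  rewrite (eq_bigl (fun k' => k' == k)) ?big_pred1_eq // => k'.
  by rewrite (inj_eq enum_val_inj).
have := H b; rewrite Hrc.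
suff -> : Omega lam b = Omega lam (restr S b) + OmegaSc lam v.
  by rewrite lerD2l.
rewrite -Hrc /Omega /OmegaSc -split_eq (sl1_split S) sort_cat_sep //.
move=> a c /mapP[i iS ->].
rewrite /Cb -(mapEV (fun i => `|b ord0 i|)) => /mapP[k _ ->].
rewrite mem_enum in iS; rewrite [b ord0 i]mxE iS (ger0_norm M0).
have -> : b ord0 (enum_val k) = restrC S b ord0 k. by rewrite /restrC [RHS]mxE.
rewrite Hrc /M (bigD1 k) //= lerDl; apply: sumr_ge0 => j _; exact: normr_ge0.
Qed.
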